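(* Let $X,Y$ be random variables on finite alphabets $\mathcal{X},\mathcal{Y}$ with $|\mathcal{X}|<|\mathcal{Y}|$ and joint pmf $P_{XY}$ whose marginals $P_X,P_Y$ have all entries positive, and suppose the $|\mathcal{X}|\times|\mathcal{Y}|$ matrix $P_{X|Y}$ has full row rank. Let $\epsilon\ge0$. Consider the problem of maximizing $I(U;Y)$ over all finite alphabets $\mathcal{U}$ and kernels $P_{U|Y}$, where the joint distribution is $P_{XYU}(x,y,u)=P_{XY}(x,y)P_{U|Y}(u|y)$ (so $X-Y-U$ is a Markov chain), subject to $\|P_{X|U=u}-P_X\|_1\le\epsilon$ for all $u\in\mathcal{U}$ (with $P_U(u)>0$). Then the supremum of this problem equals the supremum over those $U$ with $|\mathcal{U}|\le|\mathcal{Y}|$, and this supremum is achieved (so it is a maximum).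
   Context: $\|\cdot\|_1$ denotes the $\ell_1$ norm of a vector indexed by $\mathcal{X}$. The matrix $P_{X|Y}$ has entries $P_{X|Y}(x|y)$, rows indexed by $x$ and columns by $y$. *)

(* Defs.v *)
From HB Require Import structures.
From mathcomp Require Import all_boot all_order all_algebra.
From mathcomp Require Import reals exp.
Set Implicit Arguments. Unset Strict Implicit. Unset Printing Implicit Defensive.
Import Order.TTheory GRing.Theory Num.Theory.
Local Open Scope ring_scope.

Section Info.
Variables (R : realType) (X Y : finType).

Definition is_pmf2 (P : X -> Y -> R) : Prop :=
  (forall x y, 0 <= P x y) /\ \sum_(x : X) \sum_(y : Y) P x y = 1.

Definition margX (P : X -> Y -> R) (x : X) : R := \sum_(y : Y) P x y.
Definition margY (P : X -> Y -> R) (y : Y) : R := \sum_(x : X) P x y.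

Definition condXY (P : X -> Y -> R) (x : X) (y : Y) : R := P x y / margY P y.

Definition condXY_mx (P : X -> Y -> R) : 'M[R]_(#|X|, #|Y|) :=
  \matrix_(i, j) condXY P (enum_val i) (enum_val j).

Variable U : finType.

Definition is_kernel (K : Y -> U -> R) : Prop :=
  (forall y u, 0 <= K y u) /\ (forall y, \sum_(u : U) K y u = 1).

Definition jointUY (P : X -> Y -> R) (K : Y -> U -> R) (u : U) (y : Y) : R :=
  margY P y * K y u.

Definition margU (P : X -> Y -> R) (K : Y -> U -> R) (u : U) : R :=
  \sum_(y : Y) jointUY P K u y.

(* P_{X|U=u}(x) computed from P_{XYU}(x,y,u) = P_{XY}(x,y) P_{U|Y}(u|y) *)
Definition condXU (P : X -> Y -> R) (K : Y -> U -> R) (u : U) (x : X) : R :=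
  (\sum_(y : Y) P x y * K y u) / margU P K u.

(* I(U;Y) with the convention 0 log 0 = 0 (natural logarithm) *)
Definition mutinfoUY (P : X -> Y -> R) (K : Y -> U -> R) : R :=
  \sum_(u : U) \sum_(y : Y)
    (if jointUY P K u y == 0 then 0
     else jointUY P K u y * ln (jointUY P K u y / (margU P K u * margY P y))).

Definition privacy_ok (P : X -> Y -> R) (eps : R) (K : Y -> U -> R) : Prop :=
  forall u : U, 0 < margU P K u ->
    \sum_(x : X) `|condXU P K u x - margX P x| <= eps.

Definition feasible (P : X -> Y -> R) (eps : R) (K : Y -> U -> R) : Prop :=
  is_kernel K /\ privacy_ok P eps K.

End Info.

(* Main.v *)
Require Import Defs.
From HB Require Import structures.
From mathcomp Require Import all_boot all_order all_algebra.
From mathcomp Require Import reals exp.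
From mathcomp Require Import boolp classical_sets topology normedtype derive.
Import Order.TTheory GRing.Theory Num.Theory.
Import numFieldNormedType.Exports.
Local Open Scope ring_scope.
From mathcomp Require Import lra ring.
Section Phi.
Variable R : realType.
Definition phi (t : R) : R := t * ln t.

Lemma phi_le0 (t : R) : t <= 0 -> phi t = 0.
Proof. by move=> t0; rewrite /phi ln0 // mulr0. Qed.

Lemma phi_bound {t : R} : 0 < t -> t <= 1 -> `|phi t| <= 2 * Num.sqrt t.
Proof.
move=> t0 t1.
set s := Num.sqrt t.
have s0 : 0 < s by rewrite sqrtr_gt0.
have ts : t = s ^+ 2 by rewrite sqr_sqrtr // ltW.
have lnle : ln t <= 0 by rewrite ln_le0.
rewrite /phi ler0_norm; last by rewrite mulr_ge0_le0 // ltW.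
rewrite ts lnXn //.
have h : - ln s < s^-1.
  by rewrite -lnV ?posrE // ln_sublinear // invr_gt0.
have e : s ^+ 2 * s^-1 = s by rewrite expr2 -mulrA divff ?gt_eqF // mulr1.
have : s ^+ 2 * - ln s <= s.
  by rewrite -[leRHS]e ler_pM2l ?exprn_gt0 // ltW.
rewrite mulrN mulrnAr mulr2n.
move: (s ^+ 2 * ln s) => a; lra.
Qed.

Lemma phi_cont : continuous phi.
Proof.
move=> x.
case: (ltrgt0P x) => [x0|x0|->].
- apply: continuousM => //; exact: continuous_ln.
- rewrite /continuous_at phi_le0 ?ltW //.
  apply: cvg_trans; first apply: (near_eq_cvg (f := fun=> 0)).
    near=> t; rewrite phi_le0 //; near: t.
    exact: (lt_le_nbhsl x0).
  exact: cvg_cst.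
- rewrite /continuous_at; apply/cvgrPdist_lt => e e0.
  have e20 : 0 < (e / 2) ^+ 2 by rewrite exprn_gt0 // divr_gt0.
  near=> t.
  rewrite phi_le0 // sub0r normrN.
  case: (leP t 0) => [t0|t0]; first by rewrite phi_le0 // normr0.
  have t1 : t <= 1 by near: t; apply: lt_le_nbhsl; exact: ltr01.
  have hb := phi_bound t0 t1.
  have te : t < (e / 2) ^+ 2 by near: t; exact: lt_nbhsl.
  have : Num.sqrt t < Num.sqrt ((e / 2) ^+ 2) by rewrite ltr_sqrt.
  rewrite sqrtr_sqr ger0_norm; last by rewrite ltW // divr_gt0.
  lra.
Unshelve. all: by end_near.
Qed.
End Phi.
Section LP.
Variables (R : realType) (Y U : finType) (K : Y -> U -> R).
Hypothesis K0 : forall y u, 0 <= K y u.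

Definition Sw (w : U -> R) : {set U} := [set u | (w u != 0) && [exists y, K y u != 0]].

Lemma dep_exists (S : {set U}) : (#|Y| < #|S|)%N ->
  exists d : U -> R, [/\ forall u, u \notin S -> d u = 0,
     exists u, d u != 0 & forall y, \sum_u d u * K y u = 0].
Proof.
move=> hS.
pose m := #|S|.
pose M : 'M[R]_(m, #|Y|) := \matrix_(s, j) K (enum_val j) (@enum_val U (mem S) s).
have rk : (\rank M < m)%N by apply: (leq_ltn_trans (rank_leq_col M)).
have kr : (0 < \rank (kermx M))%N by rewrite mxrank_ker subn_gt0.
have kn0 : kermx M != 0 by rewrite -mxrank_eq0 -lt0n.
have [i ri] : exists i, row i (kermx M) != 0.
  apply/existsP; apply: contraT; rewrite negb_exists => /forallP h.
  suff : kermx M == 0 by rewrite (negbTE kn0). apply/eqP/row_matrixP => i; rewrite row0; exact/eqP/negPn.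
set r := row i (kermx M) in ri.
have rM : r *m M = 0 by apply/sub_kermxP; exact: row_sub.
pose d u := \sum_(s | @enum_val U (mem S) s == u) r 0 s.
exists d; split.
- move=> u uS; rewrite /d big1 // => s /eqP es.
  by move: uS; rewrite -es enum_valP.
- have [s rs] : exists s, r 0 s != 0.
    apply/existsP; apply: contraT; rewrite negb_exists => /forallP h.
    suff : r == 0 by rewrite (negbTE ri). apply/eqP/rowP => s; move: (h s); rewrite negbK => /eqP ->; by rewrite mxE.
  exists (@enum_val U (mem S) s); rewrite /d (big_pred1 s) //.
  by move=> s' /=; apply/eqP/eqP => [/enum_val_inj|->].
- move=> y.
  transitivity (\sum_s r 0 s * K y (@enum_val U (mem S) s)).
    rewrite [RHS](partition_big (fun s => @enum_val U (mem S) s) predT) //=.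
    apply: eq_bigr => u _; rewrite /d mulr_suml; apply: eq_bigr => s /eqP ->.
    by [].
  transitivity ((r *m M) 0 (enum_rank y)); last by rewrite rM mxE.
  rewrite mxE; apply: eq_bigr => s _; rewrite [M _ _]mxE enum_rankK.
  by [].
Qed.

Definition wok (w : U -> R) := (forall u, 0 <= w u) /\ (forall y, \sum_u w u * K y u = 1).

Lemma step (c : U -> R) (w : U -> R) : wok w -> (#|Y| < #|Sw w|)%N ->
  exists w', [/\ wok w', \sum_u w u * c u <= \sum_u w' u * c u &
                 (#|Sw w'| < #|Sw w|)%N].
Proof.
move=> [w0 w1] hS.
have [d [dsupp [u1 du1] dK]] := dep_exists _ hS.
pose sg : R := if 0 <= \sum_v d v * c v then 1 else -1.
have sg0 : sg != 0 by rewrite /sg; case: ifP => _; rewrite ?oppr_eq0 oner_eq0.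
pose dd u := sg * d u.
have ddsupp u : u \notin Sw w -> dd u = 0.
  by move=> h; rewrite /dd dsupp // mulr0.
have ddK y : \sum_u dd u * K y u = 0.
  by under eq_bigr do rewrite /dd -mulrA; rewrite -mulr_sumr dK mulr0.
have ddc : 0 <= \sum_u dd u * c u.
  under eq_bigr do rewrite /dd -mulrA; rewrite -mulr_sumr /sg.
  case: ifP => [h|/negbT]; first by rewrite mul1r.
  by rewrite -ltNge mulN1r oppr_ge0 => /ltW.
have ddu1 : dd u1 != 0 by rewrite /dd mulf_neq0.
have [u0 du0] : exists u0, dd u0 < 0.
  apply/existsP; apply: contraT; rewrite negb_exists => /forallP h.
  have hpos u : 0 <= dd u by rewrite leNgt; exact: h.
  have u1S : u1 \in Sw w by apply: contraR ddu1 => /ddsupp ->; rewrite eqxx.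
  move: (u1S); rewrite inE => /andP[_ /existsP[y Ky]].
  have Kpos : 0 < K y u1 by rewrite lt_def Ky K0.
  have dpos : 0 < dd u1 by rewrite lt_def ddu1 hpos.
  have := ddK y; rewrite (bigD1 u1) //=.
  have : 0 <= \sum_(u | u != u1) dd u * K y u.
    by apply: sumr_ge0 => u _; rewrite mulr_ge0.
  have : 0 < dd u1 * K y u1 by rewrite mulr_gt0.
  move: (dd u1 * K y u1) (\sum_(u | u != u1) dd u * K y u) => a b; lra.
case: (@arg_minP _ R U u0 (fun u => dd u < 0) (fun u => w u / - dd u) du0).
move=> us dus hmin.
set t := w us / - dd us.
have t0 : 0 <= t by rewrite divr_ge0 // oppr_ge0 ltW.
pose w' u := w u + t * dd u.
exists w'; split.
- split.
  + move=> u; rewrite /w'; case: (ltP (dd u) 0) => hu.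
      have := hmin u hu; rewrite /= -/t => htu.
      have ndpos : 0 < - dd u by rewrite oppr_gt0.
      move: htu; rewrite ler_pdivlMr // => htu.
      move: htu; rewrite mulrN; lra.
    by rewrite addr_ge0 // mulr_ge0.
  + move=> y; rewrite /w'.
    under eq_bigr do rewrite mulrDl -mulrA.
    by rewrite big_split /= -mulr_sumr ddK mulr0 addr0 w1.
- rewrite /w'.
  under [X in _ <= X]eq_bigr do rewrite mulrDl -mulrA.
  by rewrite big_split /= -mulr_sumr lerDl mulr_ge0.
- have usS : us \in Sw w.
    by apply: contraLR dus => /ddsupp ->; rewrite ltxx.
  have w'us : w' us = 0.
    have nd : dd us != 0 by rewrite lt_eqF.
    by rewrite /w' /t invrN mulrN mulNr -mulrA mulVf // mulr1 subrr.
  have sub : Sw w' \subset Sw w :\ us.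
    apply/fintype.subsetP => u; rewrite !inE => /andP[wu' ->]; rewrite andbT.
    apply/andP; split.
      by apply: contraNneq wu' => ->; rewrite w'us.
    apply: contraNT wu' => wu; rewrite /w'.
    have : u \notin Sw w by rewrite inE negb_and wu.
    move=> /ddsupp ->; rewrite mulr0 addr0; exact: negPn.
  apply: (leq_ltn_trans (subset_leq_card sub)).
  by rewrite (cardsD1 us (Sw w)) usS.
Qed.

Lemma lp (c : U -> R) (w : U -> R) : wok w ->
  exists w', [/\ wok w', \sum_u w u * c u <= \sum_u w' u * c u &
                 (#|Sw w'| <= #|Y|)%N].
Proof.
move=> ww.
suff : forall n w, (#|Sw w| <= n)%N -> wok w -> exists w', [/\ wok w', \sum_u w u * c u <= \sum_u w' u * c u &
                 (#|Sw w'| <= #|Y|)%N] by apply => //.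
elim => [|n IH] {}w hn {}ww.
  by exists w; split => //; apply: leq_trans hn _.
case: (leqP #|Sw w| #|Y|) => hY; first by exists w.
have [w2 [ww2 c2 h2]] := step c w ww hY.
have [w3 [ww3 c3 h3]] := IH w2 (leq_trans h2 hn) ww2.
by exists w3; split => //; apply: le_trans c3.
Qed.
End LP.
Section Cols.
Variables (R : realType) (X Y : finType) (P : X -> Y -> R) (eps : R).
Hypothesis P0 : forall x y, 0 <= P x y.
Hypothesis Py0 : forall y, 0 < margY P y.

Definition Fc (col : Y -> R) : R :=
  \sum_y (if margY P y * col y == 0 then 0
          else margY P y * col y * ln (margY P y * col y / ((\sum_y' margY P y' * col y') * margY P y))).

Definition Gc (col : Y -> R) : Prop :=
  0 < \sum_y margY P y * col y ->
  \sum_x `|(\sum_y P x y * col y) / (\sum_y margY P y * col y) - margX P x| <= eps.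

Lemma mutinfoE (U : finType) (K : Y -> U -> R) :
  mutinfoUY P K = \sum_u Fc (fun y => K y u).
Proof. by []. Qed.

Lemma privacyE (U : finType) (K : Y -> U -> R) :
  privacy_ok P eps K <-> forall u, Gc (fun y => K y u).
Proof. by []. Qed.

Lemma Fc0 : Fc (fun=> 0) = 0.
Proof. by rewrite /Fc big1 // => y _; rewrite mulr0 eqxx. Qed.

Lemma Gc0 : Gc (fun=> 0).
Proof. by rewrite /Gc big1 ?ltxx // => y _; rewrite mulr0. Qed.

Lemma Fc_scale (a : R) (col : Y -> R) : 0 <= a ->
  Fc (fun y => a * col y) = a * Fc col.
Proof.
rewrite le_eqVlt => /orP[/eqP <-|a0].
  rewrite /Fc big1; first by rewrite [RHS]mul0r. move=> y _. by rewrite mul0r mulr0 eqxx.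
rewrite /Fc mulr_sumr; apply: eq_bigr => y _.
have hS : \sum_y' margY P y' * (a * col y') = a * \sum_y' margY P y' * col y'.
  by rewrite mulr_sumr; apply: eq_bigr => z _; rewrite mulrCA.
rewrite hS mulrCA mulf_eq0 (gt_eqF a0) /=.
case: ifP => _; first by rewrite mulr0.
rewrite -[LHS]mulrA; congr (a * (_ * ln _)).
by rewrite -(mulrA a) invfM mulrACA divff ?mul1r // gt_eqF.
Qed.

Lemma Gc_scale (a : R) (col : Y -> R) : 0 <= a -> Gc col ->
  Gc (fun y => a * col y).
Proof.
rewrite le_eqVlt => /orP[/eqP <-|a0] hG.
  by rewrite /Gc big1 ?ltxx // => y _; rewrite mul0r mulr0.
have hS : \sum_y' margY P y' * (a * col y') = a * \sum_y' margY P y' * col y'.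
  by rewrite mulr_sumr; apply: eq_bigr => z _; rewrite mulrCA.
rewrite /Gc hS pmulr_rgt0 // => hpos.
have hx : forall x, (\sum_y P x y * (a * col y)) / (a * \sum_y' margY P y' * col y') =
  (\sum_y P x y * col y) / (\sum_y' margY P y' * col y').
  move=> x.
  have -> : \sum_y P x y * (a * col y) = a * \sum_y P x y * col y.
    by rewrite mulr_sumr; apply: eq_bigr => z _; rewrite mulrCA.
  by rewrite invfM mulrACA divff ?mul1r // gt_eqF.
by under eq_bigr => x _ do rewrite hx; apply: hG.
Qed.

Section Push.
Variables (U : finType) (K1 : Y -> U -> R) (S : {set U}) (g : U -> Y).
Hypothesis K1S : forall u, u \notin S -> forall y, K1 y u = 0.
Hypothesis ginj : {in S &, injective g}.
Definition K2 (y i : Y) : R := \sum_(u | g u == i) K1 y u.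

Lemma fiber i :
  ((fun y => K2 y i) = (fun=> 0) /\ forall u, g u == i -> (fun y => K1 y u) = (fun=> 0)) \/
  exists u0, [/\ g u0 == i, (fun y => K2 y i) = (fun y => K1 y u0) &
     forall u, g u == i -> u != u0 -> (fun y => K1 y u) = (fun=> 0)].
Proof.
case: (pickP (fun u => (u \in S) && (g u == i))) => [u0 /andP[u0S gu0]|hn].
  have oth u : g u == i -> u != u0 -> (fun y => K1 y u) = (fun=> 0).
    move=> gu un; apply: funext => y; apply: K1S.
    apply: contra un => uS; apply/eqP; apply: ginj => //.
    by rewrite (eqP gu) (eqP gu0).
  right; exists u0; split => //.
  apply: funext => y; rewrite /K2 (bigD1 u0) //= big1 ?addr0 //.
  by move=> u /andP[gu un]; have := oth u gu un => /(congr1 (fun f => f y)).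
have zero u : g u == i -> (fun y => K1 y u) = (fun=> 0).
  move=> gu; apply: funext => y; apply: K1S.
  by move: (hn u) => /= /negbT; rewrite gu andbT.
left; split => //.
apply: funext => y; rewrite /K2 big1 // => u gu.
by have := zero u gu => /(congr1 (fun f => f y)).
Qed.

Lemma push_sum (H : (Y -> R) -> R) : H (fun=> 0) = 0 -> forall i,
  H (fun y => K2 y i) = \sum_(u | g u == i) H (fun y => K1 y u).
Proof.
move=> H0 i; case: (fiber i) => [[-> z]|[u0 [gu0 -> oth]]].
  by rewrite big1 // => u gu; rewrite z.
by rewrite (bigD1 u0) //= big1 ?addr0 // => u /andP[gu un]; rewrite oth.
Qed.

Lemma push_prop (G : (Y -> R) -> Prop) : G (fun=> 0) ->
  (forall u, G (fun y => K1 y u)) -> forall i, G (fun y => K2 y i).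
Proof.
move=> G0 GK i; case: (fiber i) => [[-> z]|[u0 [gu0 -> oth]]] //.
Qed.

Lemma K2_sum y : \sum_i K2 y i = \sum_u K1 y u.
Proof.
by rewrite [RHS](partition_big g predT) //.
Qed.
End Push.

Lemma reduce (y0 : Y) (U : finType) (K : Y -> U -> R) : feasible P eps K ->
  exists K' : Y -> Y -> R, feasible P eps K' /\ mutinfoUY P K <= mutinfoUY P K'.
Proof.
move=> [[Kge0 Ksum] priv].
pose c u := Fc (fun y => K y u).
have w1 : @wok R Y U K (fun=> 1).
  by split => [u|y]; [exact: ler01 | under eq_bigr do rewrite mul1r; exact: Ksum].
have [w [[wge0 wsum] wc wS]] := @lp R Y U K Kge0 c _ w1.
pose S := @Sw R Y U K w.
pose K1 y u := w u * K y u.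
have K1S u : u \notin S -> forall y, K1 y u = 0.
  move=> uS y; rewrite /K1; move: uS; rewrite inE negb_and negbK.
  case/orP => [/eqP -> |]; first by rewrite mul0r.
  by rewrite negb_exists => /forallP h; move: (h y); rewrite negbK => /eqP ->; rewrite mulr0.
pose g u := nth y0 (enum Y) (index u (enum S)).
have ginj : {in S &, injective g}.
  move=> u v uS vS; rewrite /g => /eqP.
  have hu : (index u (enum S) < size (enum Y))%N.
    rewrite -cardE; apply: leq_trans wS; rewrite cardE index_mem mem_enum //.
  have hv : (index v (enum S) < size (enum Y))%N.
    rewrite -cardE; apply: leq_trans wS; rewrite cardE index_mem mem_enum //.
  rewrite nth_uniq ?enum_uniq // => /eqP e.
  by rewrite -[u](@nth_index _ u u (enum S)) ?mem_enum // e nth_index // mem_enum.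
exists (@K2 _ K1 g); split; [split; [split|]|].
- move=> y i; apply: sumr_ge0 => u _; exact: mulr_ge0.
- by move=> y; rewrite (@K2_sum _ K1 g); exact: wsum.
- apply/privacyE; apply: (@push_prop _ _ _ _ K1S ginj _ Gc0) => u.
  exact: Gc_scale (wge0 u) (priv u).
- rewrite !mutinfoE.
  rewrite (eq_bigr (fun i => \sum_(u | g u == i) Fc (fun y => K1 y u))); last first.
    by move=> i _; exact: (@push_sum _ _ _ _ K1S ginj _ Fc0).
  have -> : \sum_i \sum_(u | g u == i) Fc (fun y => K1 y u) = \sum_u Fc (fun y => K1 y u) by rewrite [RHS](partition_big g predT).
  under [X in _ <= X]eq_bigr do rewrite /K1 Fc_scale //.
  apply: le_trans wc; rewrite le_eqVlt; apply/orP; left; apply/eqP; apply: eq_bigr => u _; by rewrite mul1r.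
Qed.
End Cols.
Local Open Scope classical_set_scope.
Arguments phi {R}.
Arguments Fc {R X Y}.
Arguments Gc {R X Y}.
Section Topo.
Variables (R : realType) (T : topologicalType).

Lemma cont_sum_seq (I : Type) (r : seq I) (f : I -> T -> R) :
  (forall i, continuous (f i)) -> continuous (fun x => \sum_(i <- r) f i x).
Proof.
move=> fc; elim: r => [|a r IH].
  have -> : (fun x => \sum_(i <- [::]) f i x) = fun=> 0.
    by apply: funext => x; rewrite big_nil.
  exact: cst_continuous.
have -> : (fun x => \sum_(i <- a :: r) f i x) = (fun x => f a x + \sum_(i <- r) f i x).
  by apply: funext => x; rewrite big_cons.
by move=> x; apply: continuousD; [exact: fc | exact: IH].
Qed.

Lemma cont_sum (I : finType) (f : I -> T -> R) :
  (forall i, continuous (f i)) -> continuous (fun x => \sum_i f i x).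
Proof. exact: cont_sum_seq. Qed.

Lemma closed_lefun (h1 h2 : T -> R) : continuous h1 -> continuous h2 ->
  closed [set x | h1 x <= h2 x].
Proof.
move=> c1 c2.
have -> : [set x | h1 x <= h2 x] = (fun x => h2 x - h1 x) @^-1` [set r : R | 0 <= r].
  by apply: funext => x; apply: propext; rewrite /= subr_ge0.
apply: preimage_closed; last exact: closed_ge.
by move=> x _; exact: (continuousB (c2 x) (c1 x)).
Qed.

Lemma closed_eqfun (h : T -> R) (c : R) : continuous h ->
  closed [set x | h x = c].
Proof.
move=> ch; have -> : [set x | h x = c] = h @^-1` [set r : R | r = c] by [].
apply: preimage_closed; last exact: closed_eq.
by move=> x _; apply: ch.
Qed.

Lemma closed_forall (I : Type) (Q : I -> T -> Prop) :
  (forall i, closed [set x | Q i x]) -> closed [set x | forall i, Q i x].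
Proof.
move=> hQ.
have -> : [set x | forall i, Q i x] = \bigcap_(i in [set: I]) [set x | Q i x].
  by apply: funext => x; apply: propext; split => [h i _|h i]; [exact: h | exact: h].
by apply: closed_bigI => i _; exact: hQ.
Qed.
End Topo.

Section Main.
Variables (R : realType) (X Y : finType) (P : X -> Y -> R) (eps : R).
Hypothesis P0 : forall x y, 0 <= P x y.
Hypothesis Py0 : forall y, 0 < margY P y.

Definition Hc (col : Y -> R) : R :=
  \sum_y phi (margY P y * col y) - phi (\sum_y margY P y * col y)
  - \sum_y margY P y * col y * ln (margY P y).

Lemma sum_ge_term (I : finType) (F : I -> R) (i : I) :
  (forall j, 0 <= F j) -> F i <= \sum_j F j.
Proof.
move=> h; rewrite (bigD1 i) //= lerDl; apply: sumr_ge0 => j _; exact: h.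
Qed.

Lemma FcE (col : Y -> R) : (forall y, 0 <= col y) -> Fc P col = Hc col.
Proof.
move=> c0; rewrite /Fc /Hc.
set m := \sum_y margY P y * col y.
have jge0 y : 0 <= margY P y * col y by rewrite mulr_ge0 // ltW.
have -> : phi m = \sum_y margY P y * col y * ln m by rewrite /phi /m mulr_suml.
rewrite -sumrB -sumrB; apply: eq_bigr => y _.
case: ifP => [/eqP ->|/negbT jn0]; first by rewrite /phi !mul0r subrr subr0.
have j0 : 0 < margY P y * col y by rewrite lt_def jn0 jge0.
have m0 : 0 < m by apply: (lt_le_trans j0); exact: (@sum_ge_term _ (fun z => margY P z * col z) y jge0).
have pj : margY P y * col y \in Num.pos by rewrite posrE.
have pm : m \in Num.pos by rewrite posrE.
have py : margY P y \in Num.pos by rewrite posrE.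
have pmy : m * margY P y \in Num.pos by rewrite posrE mulr_gt0.
rewrite /phi ln_div // (lnM pm py).
by rewrite mulrBr mulrDr; ring.
Qed.

Lemma GcE (col : Y -> R) : (forall y, 0 <= col y) ->
  Gc P eps col <->
  \sum_x `|\sum_y P x y * col y - margX P x * \sum_y margY P y * col y|
     <= eps * \sum_y margY P y * col y.
Proof.
move=> c0; rewrite /Gc.
set m := \sum_y margY P y * col y.
have m0 : 0 <= m by apply: sumr_ge0 => y _; rewrite mulr_ge0 // ltW.
have key : 0 < m -> forall x,
    `|\sum_y P x y * col y - margX P x * m| = m * `|(\sum_y P x y * col y) / m - margX P x|.
  move=> mp x.
  have -> : \sum_y P x y * col y - margX P x * m =
      m * ((\sum_y P x y * col y) / m - margX P x).
    by rewrite mulrBr mulrCA divff ?gt_eqF // mulr1 mulrC.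
  by rewrite normrM ger0_norm // ltW.
split.
- move=> hG; move: (m0); rewrite le_eqVlt => /orP[/eqP mz'|mp].
  + have mz : m = 0 by [].
    rewrite mz mulr0 big1 ?normr0 //= => x _.
    have ax : \sum_y P x y * col y = 0.
      apply/eqP; rewrite eq_le; apply/andP; split; last first.
        by apply: sumr_ge0 => y _; rewrite mulr_ge0.
      rewrite -[X in _ <= X]mz /m; apply: ler_sum => y _; apply: ler_wpM2r => //.
      exact: (@sum_ge_term _ (fun x => P x y) x (fun x => P0 x y)).
    by rewrite ax mulr0 subrr normr0.
  + under eq_bigr do rewrite key //.
    by rewrite -mulr_sumr mulrC ler_pM2r //; apply: hG.
- move=> h mp.
  under eq_bigr => x _ do rewrite -[`|_ / m - _|](mulKf (negbT (gt_eqF mp))) -key //.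
  by rewrite -mulr_sumr ler_pdivrMl // mulrC.
Qed.

Local Notation N := #|{: Y * Y}|.
Definition Kv (v : 'rV[R]_N) (y u : Y) : R := v ord0 (enum_rank (y, u)).
Definition vK (K : Y -> Y -> R) : 'rV[R]_N := \row_i K (enum_val i).1 (enum_val i).2.

Lemma KvK K : Kv (vK K) = K.
Proof. by apply: funext => y; apply: funext => u; rewrite /Kv mxE enum_rankK. Qed.

Lemma cont_coord y u : continuous (fun v => Kv v y u).
Proof. exact: coord_continuous. Qed.

Lemma cont_mulc (T : topologicalType) (c : R) (f : T -> R) : continuous f ->
  continuous (fun v => c * f v).
Proof. by move=> fc v; apply: continuousM; [exact: cst_continuous | exact: fc]. Qed.

Lemma cont_mulcr (T : topologicalType) (c : R) (f : T -> R) : continuous f ->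
  continuous (fun v => f v * c).
Proof. by move=> fc v; apply: continuousM; [exact: fc | exact: cst_continuous]. Qed.

Lemma cont_sub (T : topologicalType) (f g : T -> R) : continuous f -> continuous g ->
  continuous (fun v => f v - g v).
Proof. by move=> fc gc v; exact: (continuousB (fc v) (gc v)). Qed.

Lemma cont_norm (T : topologicalType) (f : T -> R) : continuous f ->
  continuous (fun v => `|f v|).
Proof.
move=> fc v; apply: (@continuous_comp _ _ _ f (@Num.norm _ R)); first exact: fc.
exact: norm_continuous.
Qed.

Lemma cont_phi (T : topologicalType) (f : T -> R) : continuous f ->
  continuous (fun v => phi (f v)).
Proof.
move=> fc v; apply: (@continuous_comp _ _ _ f phi); first exact: fc.
exact: phi_cont.
Qed.

Definition gobj (v : 'rV[R]_N) : R := \sum_u Hc (fun y => Kv v y u).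

Lemma gobj_cont : continuous gobj.
Proof.
apply: cont_sum => u; rewrite /Hc.
apply: cont_sub; first apply: cont_sub.
- apply: cont_sum => y; apply: cont_phi; apply: cont_mulc; exact: cont_coord.
- apply: cont_phi; apply: cont_sum => y; apply: cont_mulc; exact: cont_coord.
- apply: cont_sum => y; apply: cont_mulcr; apply: cont_mulc; exact: cont_coord.
Qed.

Definition Afeas : set 'rV[R]_N := [set v | feasible P eps (Kv v)].

Lemma Afeas_closed : closed Afeas.
Proof.
have -> : Afeas = [set v | (forall y u, 0 <= Kv v y u)] `&`
   [set v | forall y, \sum_u Kv v y u = 1] `&`
   [set v | forall u, \sum_x `|\sum_y P x y * Kv v y u - margX P x * \sum_y margY P y * Kv v y u|
     <= eps * \sum_y margY P y * Kv v y u].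
  apply: funext => v; apply: propext; split.
    move=> [[h1 h2] h3]; split; [split|] => // u.
    have hc : forall y, 0 <= Kv v y u by move=> y; exact: h1.
exact: (proj1 (GcE _ hc) (h3 u)).
  move=> [[h1 h2] h3]; split; [split|] => // u.
  have hc : forall y, 0 <= Kv v y u by move=> y; exact: h1.
  exact: (proj2 (GcE _ hc) (h3 u)).
apply: closedI; first apply: closedI.
- apply: closed_forall => y; apply: closed_forall => u.
  apply: closed_lefun; [exact: cst_continuous | exact: cont_coord].
- apply: closed_forall => y; apply: closed_eqfun; apply: cont_sum => u; exact: cont_coord.
- apply: closed_forall => u; apply: closed_lefun.
    apply: cont_sum => x; apply: cont_norm; apply: cont_sub.
      apply: cont_sum => y; apply: cont_mulc; exact: cont_coord.
    apply: cont_mulc; apply: cont_sum => y; apply: cont_mulc; exact: cont_coord.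
  apply: cont_mulc; apply: cont_sum => y; apply: cont_mulc; exact: cont_coord.
Qed.

Lemma Afeas_box : Afeas `<=` [set v : 'rV[R]_N | forall i, `[(0:R), 1]%classic (v ord0 i)].
Proof.
move=> v [[h0 h1] _] i /=.
have -> : v ord0 i = Kv v (enum_val i).1 (enum_val i).2.
  by rewrite /Kv -surjective_pairing enum_valK.
rewrite in_itv /=; apply/andP; split; first exact: h0.
rewrite -(h1 (enum_val i).1).
exact: (@sum_ge_term _ (fun u => Kv v (enum_val i).1 u) _ (h0 _)).
Qed.

Lemma Afeas_compact : compact Afeas.
Proof.
apply: (subclosed_compact Afeas_closed _ Afeas_box).
apply: (@rV_compact _ _ (fun=> `[(0:R), 1]%classic)) => i.
exact: segment_compact.
Qed.

Lemma mutinfo_gobj (K : Y -> Y -> R) : (forall y u, 0 <= K y u) ->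
  mutinfoUY P K = gobj (vK K).
Proof.
move=> K0; rewrite /gobj KvK mutinfoE; apply: eq_bigr => u _.
by apply: FcE => y; exact: K0.
Qed.

Lemma Afeas_nonempty (y0 : Y) : 0 <= eps -> \sum_y margY P y = 1 -> Afeas (vK (fun y u => (u == y0)%:R)).
Proof.
move=> eps0 hsum; rewrite /Afeas /= KvK; split; first split.
- by move=> y u; exact: ler0n.
- move=> y; rewrite (bigD1 y0) //= eqxx big1 ?addr0 // => u /negbTE ->; by [].
- apply/privacyE => u; case: (eqVneq u y0) => [_|_].
    rewrite /Gc => _.
    apply: (le_trans _ eps0); rewrite le_eqVlt; apply/orP; left; apply/eqP; apply: big1 => x _.
    have -> : \sum_y margY P y * 1%:R = 1.
      by rewrite -[RHS]hsum; apply: eq_bigr => y _; rewrite mulr1.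
    rewrite divr1.
    have -> : \sum_y P x y * 1%:R = margX P x.
      by apply: eq_bigr => y _; rewrite mulr1.
    by rewrite subrr normr0.
  exact: Gc0.
Qed.
End Main.

Local Close Scope classical_set_scope.

Theorem proposition2 (R : realType) (X Y : finType) (P : X -> Y -> R) (eps : R) :
  (#|X| < #|Y|)%N ->
  is_pmf2 P ->
  (forall x, 0 < margX P x) ->
  (forall y, 0 < margY P y) ->
  \rank (condXY_mx P) = #|X| ->
  0 <= eps ->
  exists (U : finType) (K : Y -> U -> R),
    [/\ (#|U| <= #|Y|)%N, feasible P eps K &
      forall (U' : finType) (K' : Y -> U' -> R),
        feasible P eps K' -> mutinfoUY P K' <= mutinfoUY P K].
Proof.
move=> hXY [P0 Psum] PX0 PY0 _ eps0.
have [y0 _] : exists y0 : Y, y0 \in Y.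
  by apply/card_gt0P; apply: leq_ltn_trans hXY.
have hsum : \sum_y margY P y = 1.
  by rewrite /margY exchange_big.
have A0 : (@Afeas R X Y P eps !=set0)%classic.
  exists (@vK R Y (fun y u => (u == y0)%:R)).
  exact: (@Afeas_nonempty R X Y P eps y0 eps0 hsum).
have [v vA vmax] := EVT_max_rV A0 (@Afeas_compact R X Y P eps P0 PY0)
  (continuous_subspaceT (A := @Afeas R X Y P eps) (@gobj_cont R X Y P)).
exists Y, (@Kv R Y v); split => //.
  by move: vA; rewrite inE.
move=> U' K' hK'.
have [K2 [f2 le2]] := @reduce R X Y P eps y0 U' K' hK'.
apply: (le_trans le2).
have K2ge0 : forall y u, 0 <= K2 y u by case: f2 => [[]].
have vge0 : forall y u, 0 <= @Kv R Y v y u by move: vA; rewrite inE => -[[]].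
rewrite (@mutinfo_gobj R X Y P PY0 K2 K2ge0) (@mutinfo_gobj R X Y P PY0 _ vge0).
rewrite (_ : @vK R Y (@Kv R Y v) = v); last first.
  by apply/rowP => i; rewrite mxE /Kv -surjective_pairing enum_valK.
apply: vmax; rewrite inE /Afeas /= (@KvK R Y) //.
Qed.
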